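(* Let $Q$ be a finite group and fix integers $g,r\ge 1$. Let $p(Q,g,r,n)$ be the probability that the group $G=\langle a_1,\dots,a_g\mid R_1,\dots,R_r\rangle$ of a random $g$-generator, $r$-relator presentation of complexity $n$ admits an epimorphism onto $Q$. Then $p(Q,g,r,n)$ converges as $n\to\infty$. Moreover, for each $k\ge 0$ the probability that $G$ has exactly $k$ epimorphisms onto $Q$, counted modulo $\mathrm{Aut}(Q)$, also converges as $n\to\infty$.
   Context: A random relator of length (complexity) $n$ in the free group $F_g$ on $a_1,\dots,a_g$ is a word $x_1x_2\cdots x_n$ where each letter $x_j$ is one of $a_i^{\pm1}$ ($1\le i\le g$) or the identity, all $(2g+1)^n$ such words being equally likely. A random presentation of complexity $n$ uses $r$ independent random relators $R_1,\dots,R_r$ of length $n$. Two epimorphisms to $Q$ are identified if they differ by an automorphism of $Q$ (equivalently, one counts normal subgroups with quotient $Q$). *)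

(* Defs.v *)
From Stdlib Require Import Reals.
From Coquelicot Require Import Coquelicot.
From HB Require Import structures.
From mathcomp Require Import all_boot all_order all_fingroup.
Set Implicit Arguments. Unset Strict Implicit. Unset Printing Implicit Defensive.

(* A letter over a_1..a_g: None = identity, Some (i,false) = a_i,
   Some (i,true) = a_i^{-1}.  There are exactly 2g+1 letters. *)
Definition letter (g : nat) : finType := option ('I_g * bool).

Definition word (g n : nat) : finType := {ffun 'I_n -> letter g}.

Definition presentation (g r n : nat) : finType := {ffun 'I_r -> word g n}.

Section Eval.
Variable gT : finGroupType.
Variables g r n : nat.

Definition eval_letter (x : {ffun 'I_g -> gT}) (l : letter g) : gT :=
  match l with
  | None => 1%g
  | Some (i, b) => if b then ((x i)^-1)%g else x i
  end.

Definition eval_word (x : {ffun 'I_g -> gT}) (w : word g n) : gT :=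
  (\prod_(j < n) eval_letter x (w j))%g.

(* Epimorphisms <a_1..a_g | R_1..R_r> ->> gT, identified (via the universal
   property of the presentation) with the images of the generators: tuples
   generating gT and killing every relator. *)
Definition epis (P : presentation g r n) : {set {ffun 'I_g -> gT}} :=
  [set x : {ffun 'I_g -> gT} |
     (<<[set x i | i : 'I_g]>>%g == [set: gT]) &&
     [forall j : 'I_r, eval_word x (P j) == 1%g]].

Definition aut_orbit (x : {ffun 'I_g -> gT}) : {set {ffun 'I_g -> gT}} :=
  [set [ffun i => a (x i)] | a : {perm gT} in Aut [set: gT]].

Definition num_epi_mod_aut (P : presentation g r n) : nat :=
  #|[set aut_orbit x | x in epis P]|.

End Eval.

Definition p_epi (gT : finGroupType) (g r n : nat) : R :=
  INR #|[set P : presentation g r n | epis gT P != set0]|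
  / INR #|{: presentation g r n}|.

Definition p_epi_exactly (gT : finGroupType) (g r : nat) (k n : nat) : R :=
  INR #|[set P : presentation g r n | num_epi_mod_aut gT P == k]|
  / INR #|{: presentation g r n}|.

(* Main.v *)
Require Import Defs.
From Stdlib Require Import Reals.
From Coquelicot Require Import Coquelicot.
From mathcomp Require Import all_boot all_order all_fingroup all_algebra.
From mathcomp Require Import Rstruct ring lra.
Import Order.TTheory GRing.Theory Num.Theory.
Set Implicit Arguments. Unset Strict Implicit. Unset Printing Implicit Defensive.

Section Walk.
Variables (K : finGroupType) (L : finType) (s : L -> K) (l0 : L).
Hypothesis sl0 : s l0 = 1%g.
Variable c : nat -> K -> nat.
Hypothesis c0 : forall k, c 0 k = (k == 1%g).
Hypothesis cS : forall n k, c n.+1 k = (\sum_(l : L) c n (k * (s l)^-1)%g)%N.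

Local Definition H : {group K} := (<<[set s l | l : L]>>)%G.

Lemma sH l : s l \in H.
Proof. by apply: mem_gen; apply: imset_f. Qed.

Lemma c_sum n : (\sum_(k : K) c n k)%N = (#|L| ^ n)%N.
Proof.
elim: n => [|n IH].
  under eq_bigr do rewrite c0.
  rewrite (bigD1 1%g) //= eqxx big1 // => k /negbTE -> //.
under eq_bigr do rewrite cS.
rewrite exchange_big /=.
under eq_bigr => l _.
  rewrite (reindex_inj (mulIg (s l))) /=.
  under eq_bigr do rewrite mulgK.
  rewrite IH.
  over.
by rewrite sum_nat_const expnS.
Qed.

Lemma c_out n k : k \notin H -> c n k = 0%N.
Proof.
elim: n k => [|n IH] k kH.
  by rewrite c0; case: eqP => // ek; rewrite ek group1 in kH.
rewrite cS big1 // => l _; apply: IH.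
by rewrite groupMr ?groupV ?sH.
Qed.

Lemma c_posS n k l : (0 < c n k)%N -> (0 < c n.+1 (k * s l)%g)%N.
Proof. by move=> h; rewrite cS (bigD1 l) //= mulgK ltn_addr. Qed.

Lemma c_posS' n k : (0 < c n k)%N -> (0 < c n.+1 k)%N.
Proof. by move=> /(c_posS l0); rewrite sl0 mulg1. Qed.

Local Definition S n := [set k | (0 < c n k)%N].

Lemma S_stab : exists n, S n.+1 \subset S n.
Proof.
suff: forall n, (exists m, S m.+1 \subset S m) \/ (n < #|S n|)%N.
  move=> /(_ #|K|) [//|]; by rewrite ltnNge max_card.
elim=> [|n [IH|IH]]; [right| by left|].
  by rewrite card_gt0; apply/set0Pn; exists 1%g; rewrite inE c0 eqxx.
case: (boolP (S n.+1 \subset S n)) => hs; first by left; exists n.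
right; apply: (leq_ltn_trans IH); apply: proper_card; rewrite properEneq.
apply/andP; split.
  by apply/eqP => e; rewrite e subxx in hs.
by apply/subsetP => k; rewrite !inE; apply: c_posS'.
Qed.

Lemma c_pos : exists m, forall h, h \in H -> (0 < c m h)%N.
Proof.
have [n hn] := S_stab.
have cl : forall k l, k \in S n -> (k * s l)%g \in S n.
  by move=> k l; rewrite inE => /(c_posS l) h; apply: (subsetP hn); rewrite inE.
pose G' := [set x : K | [forall y in S n, (y * x)%g \in S n]].
have gG : group_set G'.
  apply/group_setP; split.
    by rewrite inE; apply/forall_inP => y yS; rewrite mulg1.
  move=> x y; rewrite !inE => /forall_inP hx /forall_inP hy.
  by apply/forall_inP => z zS; rewrite mulgA; apply: hy; apply: hx.
have HG : H \subset Group gG.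
  rewrite gen_subG; apply/subsetP => x /imsetP [l _ ->].
  by rewrite inE; apply/forall_inP => y yS; apply: cl.
exists n => h hh.
have := subsetP HG h hh; rewrite inE => /forall_inP /(_ 1%g).
have : (1%g \in S n).
  by rewrite inE; elim: (n) => [|m IH]; [rewrite c0 eqxx | exact: c_posS'].
by move=> h1 /(_ h1); rewrite mul1g inE.
Qed.


Lemma c_conv n m h : c (n + m) h = (\sum_(k : K) c m k * c n (h * k^-1)%g)%N.
Proof.
elim: m h => [|m IH] h.
  under eq_bigr do rewrite c0.
  rewrite addn0 (bigD1 1%g) //= eqxx invg1 mulg1 mul1n big1 ?addn0 // => k /negbTE -> //.
rewrite addnS cS.
under eq_bigr do rewrite IH.
under [RHS]eq_bigr do rewrite cS big_distrl /=.
rewrite [RHS]exchange_big /=.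
apply: eq_bigr => l _.
rewrite [RHS](reindex_inj (mulIg (s l))) /=.
apply: eq_bigr => k _.
by rewrite mulgK invMg mulgA.
Qed.

Local Open Scope ring_scope.
Local Notation N := #|L|.
Local Definition hH : R := #|H|%:R.
Local Definition e n h := (c n h)%:R * hH - (N ^ n)%N%:R.
Local Definition D n := \sum_(h in H) `|e n h|.

Lemma sum_cH m : (\sum_(k in H) c m k)%N = (N ^ m)%N.
Proof.
rewrite -(c_sum m) [RHS](bigID (fun k => k \in H)) /= [X in _ = (_ + X)%N]big1 ?addn0 //.
by move=> k /c_out ->.
Qed.

Lemma e_conv n m h : e (n + m) h = \sum_(k in H) (c m k)%:R * e n (h * k^-1)%g.
Proof.
rewrite /e c_conv.
have -> : (\sum_k c m k * c n (h * k^-1)%g)%N = (\sum_(k in H) c m k * c n (h * k^-1)%g)%N.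
  rewrite [LHS](bigID (fun k => k \in H)) /= [X in (_ + X)%N]big1 ?addn0 //.
  by move=> k /c_out ->.
rewrite natr_sum big_distrl /=.
under [RHS]eq_bigr do rewrite mulrBr.
rewrite sumrB; congr (_ - _).
  by apply: eq_bigr => k _; rewrite natrM mulrA.
by rewrite -mulr_suml -natr_sum sum_cH -natrM expnD mulnC.
Qed.

Lemma shift (f : K -> R) k : k \in H -> \sum_(h in H) f (h * k^-1)%g = \sum_(h in H) f h.
Proof.
move=> kH; rewrite (reindex_inj (mulIg k)) /=.
by apply: eq_big => h; [rewrite groupMr | rewrite mulgK].
Qed.

Lemma shift2 (f : K -> R) h : h \in H -> \sum_(k in H) f (h * k^-1)%g = \sum_(k in H) f k.
Proof.
move=> hH'; rewrite (reindex_inj (inj_comp (mulIg h) (@invg_inj K))) /=.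
by apply: eq_big => k; [rewrite groupMr // groupV | rewrite invMg invgK mulKVg].
Qed.

Lemma weighted (w : K -> R) (e' : K -> R) n :
  (forall k, k \in H -> 0 <= w k) ->
  (forall h, h \in H -> e' h = \sum_(k in H) w k * e n (h * k^-1)%g) ->
  \sum_(h in H) `|e' h| <= (\sum_(k in H) w k) * D n.
Proof.
move=> hw he.
apply: (@le_trans _ _ (\sum_(h in H) \sum_(k in H) w k * `|e n (h * k^-1)%g|)).
  apply: ler_sum => h hh; rewrite (he h hh).
  apply: le_trans (ler_norm_sum _ _ _) _; apply: ler_sum => k kh.
  by rewrite normrM ger0_norm ?hw.
rewrite exchange_big /= mulr_suml; apply: ler_sum => k kh.
by rewrite -mulr_sumr (shift (fun x => `|e n x|)).
Qed.

Lemma D_step n m : D (n + m) <= (N ^ m)%N%:R * D n.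
Proof.
rewrite /D -(sum_cH m) natr_sum.
apply: weighted => [k _|h _]; first exact: ler0n.
exact: e_conv.
Qed.

Lemma e_sum0 n : \sum_(h in H) e n h = 0.
Proof.
rewrite /e sumrB -big_distrl /= -natr_sum sum_cH sumr_const /hH.
by rewrite mulr_natr subrr.
Qed.

Lemma D_contr n m : (forall k, k \in H -> 0 < c m k)%N ->
  D (n + m) <= ((N ^ m)%N%:R - hH) * D n.
Proof.
move=> hp.
have -> : (N ^ m)%N%:R - hH = \sum_(k in H) ((c m k)%:R - 1).
  by rewrite sumrB -natr_sum sum_cH sumr_const.
apply: weighted => [k kH|h hh].
  by rewrite subr_ge0 ler1n hp.
rewrite e_conv.
under [RHS]eq_bigr do rewrite mulrBl mul1r.
by rewrite sumrB (shift2 (e n)) // e_sum0 subr0.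
Qed.

Lemma D_ge0 n : 0 <= D n.
Proof. by apply: sumr_ge0 => h _; exact: normr_ge0. Qed.

Lemma e_le n h : h \in H -> `|e n h| <= D n.
Proof.
by move=> hh; rewrite /D (bigD1 h) //= lerDl; apply: sumr_ge0 => k _; exact: normr_ge0.
Qed.


Local Definition E n := D n * (N ^ n)%N%:R^-1.

Lemma Npos : (0 < N)%N.
Proof. by apply/card_gt0P; exists l0. Qed.

Lemma NnR n : 0 < (N ^ n)%N%:R :> R.
Proof. by rewrite ltr0n expn_gt0 Npos. Qed.

Lemma hHpos : 0 < hH.
Proof. by rewrite /hH ltr0n cardG_gt0. Qed.

Lemma E_ge0 n : 0 <= E n.
Proof. by rewrite /E divr_ge0 ?D_ge0 // ltW ?NnR. Qed.

Lemma E_decr n : E n.+1 <= E n.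
Proof.
have := D_step n 1; rewrite addn1 expn1 => hD.
have a0 := NnR n; have n0 := NnR 1; rewrite expn1 in n0.
rewrite /E expnS natrM.
have -> : D n * (N ^ n)%N%:R^-1 = (N%:R * D n) * (N%:R * (N ^ n)%N%:R)^-1.
  by field; apply/andP; split; rewrite gt_eqF.
by apply: ler_wpM2r => //; rewrite invr_ge0 ltW // mulr_gt0.
Qed.

Lemma E_contr m n : (forall k, k \in H -> 0 < c m k)%N ->
  E (n + m) <= (1 - hH * (N ^ m)%N%:R^-1) * E n.
Proof.
move=> hp; have hD := D_contr n hp.
have a0 := NnR n; have b0 := NnR m.
rewrite /E expnD natrM.
have -> : (1 - hH * (N ^ m)%N%:R^-1) * (D n * (N ^ n)%N%:R^-1) =
   (((N ^ m)%N%:R - hH) * D n) * ((N ^ n)%N%:R * (N ^ m)%N%:R)^-1.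
  by field; apply/andP; split; rewrite gt_eqF.
by apply: ler_wpM2r => //; rewrite invr_ge0 ltW // mulr_gt0.
Qed.

Lemma E_lim : is_lim_seq E (Rbar.Finite R0).
Proof.
have [l hl] : ex_finite_lim_seq E.
  by apply: (ex_finite_lim_seq_decr _ 0) => n; apply/RleP; [exact: E_decr | exact: E_ge0].
have [m hm] := c_pos.
set rho := hH * (N ^ m)%N%:R^-1.
have h1 : is_lim_seq (fun n => E (n + m)%coq_nat) l by exact: (proj1 (is_lim_seq_incr_n E m l) hl).
have h2 := is_lim_seq_scal_l E (1 - rho) l hl.
have le1 := is_lim_seq_le _ _ _ _ (fun n => elimT RleP (E_contr n hm)) h1 h2.
have le0 := is_lim_seq_le (fun _ => 0) E (Rbar.Finite 0) l (fun n => elimT RleP (E_ge0 n)) (is_lim_seq_const 0) hl.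
simpl in le1, le0.
have rpos : 0 < rho by rewrite divr_gt0 ?hHpos ?NnR.
move/RleP: le1 => le1; move/RleP: le0 => le0.
rewrite RmultE RminusE R1E in le1; rewrite R0E in le0.
have lz : l = 0.
  apply/eqP; rewrite eq_le; apply/andP; split; nra.
by move: hl; rewrite lz.
Qed.

Local Definition mu n k := ((c n k)%:R : R) * (N ^ n)%N%:R^-1.

Lemma mu_in n h : h \in H -> `|mu n h - hH^-1| <= E n * hH^-1.
Proof.
move=> hh.
have a0 := NnR n; have h0 := hHpos.
have -> : mu n h - hH^-1 = e n h * (N ^ n)%N%:R^-1 * hH^-1.
  by rewrite /mu /e; field; apply/andP; split; rewrite gt_eqF.
rewrite /E !normrM !normfV (gtr0_norm a0) (gtr0_norm h0).
apply: ler_wpM2r; first by rewrite invr_ge0 ltW.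
apply: ler_wpM2r; first by rewrite invr_ge0 ltW.
exact: e_le.
Qed.

Lemma mu_lim k : exists l : R, is_lim_seq (fun n => mu n k) l.
Proof.
case: (boolP (k \in H)) => kH.
  exists hH^-1.
  have hE : is_lim_seq (fun n => E n * hH^-1) (Rbar.Finite 0).
    have := is_lim_seq_scal_r E (hH^-1) _ E_lim; simpl.
    by rewrite Rmult_0_l.
  apply: (is_lim_seq_le_le (fun n => hH^-1 - E n * hH^-1) _ (fun n => hH^-1 + E n * hH^-1)).
  - move=> n; have := mu_in n kH; rewrite ler_norml => /andP [a b].
    by split; apply/RleP; lra.
  - have := is_lim_seq_minus' _ _ _ _ (is_lim_seq_const hH^-1) hE.
    by rewrite Rminus_0_r.
  - have := is_lim_seq_plus' _ _ _ _ (is_lim_seq_const hH^-1) hE.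
    by rewrite Rplus_0_r.
exists 0; apply: is_lim_seq_ext (is_lim_seq_const 0) => n.
by rewrite /mu c_out // mul0r.
Qed.

End Walk.

Section Words.
Variable gT : finGroupType.
Variable g : nat.

Local Notation WT := {ffun 'I_g -> gT}.
Local Notation X := (WT * gT)%type.

Lemma sl_inj (l : letter g) : injective (fun p : X => (p.1, p.2 * eval_letter p.1 l)%g).
Proof. by move=> [a b] [a' b'] /= [ea eb]; subst a'; move: eb => /mulIg ->. Qed.

Definition sl (l : letter g) : {perm X} := perm (@sl_inj l).
Definition piw n (w : word g n) : {perm X} := (\prod_(j < n) sl (w j))%g.
Definition cw n (k : {perm X}) := #|[set w : word g n | piw w == k]|.

Lemma piw_act n (w : word g n) x y : (piw w) (x, y) = (x, y * eval_word x w)%g.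
Proof.
rewrite /piw /eval_word.
elim: (index_enum _) y => [|a r IH] y.
  by rewrite !big_nil perm1 mulg1.
by rewrite !big_cons permM permE /= IH mulgA.
Qed.

Lemma cw0 k : cw 0 k = (k == 1%g).
Proof.
have e : forall w : word g 0, piw w = 1%g by move=> w; rewrite /piw big_ord0.
rewrite /cw; case: eqP => [->|ne].
  have -> : [set w : word g 0 | piw w == 1%g] = setT by apply/setP => w; rewrite !inE e eqxx.
  by rewrite cardsT /word card_ffun card_ord expn0.
apply/eqP; rewrite cards_eq0; apply/eqP/setP => w; rewrite !inE e.
by apply/eqP => h; apply: ne.
Qed.

Definition ext n (l : letter g) (w : word g n) : word g n.+1 :=
  [ffun i : 'I_n.+1 => if unlift ord_max i is Some j then w j else l].
Definition trunc n (w : word g n.+1) : word g n :=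
  [ffun j : 'I_n => w (widen_ord (leqnSn n) j)].

Lemma widen_lift n (j : 'I_n) : widen_ord (leqnSn n) j = lift ord_max j.
Proof. by apply: val_inj; rewrite /= /bump leqNgt ltn_ord. Qed.

Lemma ext_inj n l : injective (@ext n l).
Proof.
move=> w1 w2 h; apply/ffunP => j.
by have := congr1 (fun f : word g n.+1 => f (lift ord_max j)) h; rewrite !ffunE liftK.
Qed.

Lemma ext_max n l (w : word g n) : ext l w ord_max = l.
Proof. by rewrite ffunE unlift_none. Qed.

Lemma piw_ext n l (w : word g n) : piw (ext l w) = (piw w * sl l)%g.
Proof.
rewrite /piw big_ord_recr /= ext_max; congr (_ * _)%g.
by apply: eq_bigr => j _; rewrite ffunE widen_lift liftK.
Qed.

Lemma ext_trunc n (w : word g n.+1) : w = ext (w ord_max) (trunc w).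
Proof.
apply/ffunP => i; rewrite ffunE; case: unliftP => [j ->|->] //.
by rewrite ffunE widen_lift.
Qed.

Lemma cwS n k : cw n.+1 k = (\sum_(l : letter g) cw n (k * (sl l)^-1))%N.
Proof.
rewrite /cw -sum1_card (partition_big (fun w : word g n.+1 => w ord_max) xpredT) //=.
apply: eq_bigr => l _.
rewrite sum1dep_card -(card_imset _ (@ext_inj n l)); apply: eq_card => w.
rewrite !inE; apply/andP/imsetP.
  move=> [/eqP pk /eqP wl]; have ew := ext_trunc w; rewrite wl in ew.
  exists (trunc w) => //.
  by rewrite inE -pk {2}ew piw_ext mulgK.
move=> [w' hw' ->]; move: hw'; rewrite inE => /eqP hw'.
by rewrite piw_ext hw' mulgKV ext_max.
Qed.

Lemma sl_None : sl None = 1%g.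
Proof. by apply/permP => -[x y]; rewrite permE perm1 /= mulg1. Qed.

End Words.

Lemma lim_sum (I : Type) (r : seq I) (P : pred I) (u : I -> nat -> R) (l : I -> R) :
  (forall i, is_lim_seq (u i) (l i)) ->
  is_lim_seq (fun n => (\sum_(i <- r | P i) u i n)%R) (\sum_(i <- r | P i) l i)%R.
Proof.
move=> hu; elim: r => [|a r IH].
  rewrite big_nil; apply: is_lim_seq_ext (is_lim_seq_const 0%R) => n.
  by rewrite big_nil.
rewrite big_cons; case hPa: (P a).
  apply: is_lim_seq_ext (is_lim_seq_plus' _ _ _ _ (hu a) IH) => n.
  by rewrite big_cons hPa.
by apply: is_lim_seq_ext IH => n; rewrite big_cons hPa.
Qed.

Lemma lim_prod (I : Type) (r : seq I) (P : pred I) (u : I -> nat -> R) (l : I -> R) :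
  (forall i, is_lim_seq (u i) (l i)) ->
  is_lim_seq (fun n => (\prod_(i <- r | P i) u i n)%R) (\prod_(i <- r | P i) l i)%R.
Proof.
move=> hu; elim: r => [|a r IH].
  rewrite big_nil; apply: is_lim_seq_ext (is_lim_seq_const 1%R) => n.
  by rewrite big_nil.
rewrite big_cons; case hPa: (P a).
  apply: is_lim_seq_ext (is_lim_seq_mult' _ _ _ _ (hu a) IH) => n.
  by rewrite big_cons hPa.
by apply: is_lim_seq_ext IH => n; rewrite big_cons hPa.
Qed.

Section Pres.
Variable gT : finGroupType.
Variables g r : nat.
Local Notation WT := {ffun 'I_g -> gT}.
Local Notation X := (WT * gT)%type.

Definition piP n (P : presentation g r n) : {ffun 'I_r -> {perm X}} :=
  [ffun j => piw gT (P j)].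

Lemma count_pres n (Phi : pred {ffun 'I_r -> {perm X}}) :
  #|[set P : presentation g r n | Phi (piP P)]| =
  (\sum_(F | Phi F) \prod_(j < r) cw n (F j))%N.
Proof.
rewrite -sum1_card (partition_big (@piP n) Phi) => [|P]; last by rewrite inE.
apply: eq_bigr => F hF.
rewrite sum1dep_card.
have -> : #|[set P | (P \in [set P0 : presentation g r n | Phi (piP P0)]) && (piP P == F)]|
   = #|family (fun j : 'I_r => [pred w : word g n | piw gT w == F j])|.
  apply: eq_card => P; rewrite !inE; apply/andP/familyP.
    by move=> [_ /eqP <-] j; rewrite inE ffunE.
  move=> h; have e : piP P = F.
    by apply/ffunP => j; rewrite ffunE; have := h j; rewrite inE => /eqP.
  by rewrite e hF eqxx.
rewrite card_family foldrE big_map /= enumT.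
by apply: eq_bigr => j _; rewrite /cw; apply: eq_card => w; rewrite inE.
Qed.


Lemma prob_lim (Phi : pred {ffun 'I_r -> {perm X}}) : exists l : R,
  is_lim_seq (fun n => INR #|[set P : presentation g r n | Phi (piP P)]| /
                       INR #|{: presentation g r n}|) l.
Proof.
have hm := fun k => Lim_seq_correct' _ (mu_lim (@sl_None gT g) (@cw0 gT g) (@cwS gT g) k).
have := lim_sum (r := index_enum _) (P := Phi)
   (fun F => lim_prod (r := index_enum 'I_r) (P := xpredT) (fun j => hm (F j))).
move=> h; eexists; apply: is_lim_seq_ext h => n.
rewrite RdivE !INRE count_pres natr_sum big_distrl /=.
apply: eq_bigr => F _.
rewrite /mu big_split /= prodr_const card_ord natr_prod exprVn -natrX.
by rewrite /presentation card_ffun card_ord /word card_ffun card_ord.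
Qed.

End Pres.

Definition epis' (gT : finGroupType) g r (F : {ffun 'I_r -> {perm ({ffun 'I_g -> gT} * gT)}}) :
  {set {ffun 'I_g -> gT}} :=
  [set x : {ffun 'I_g -> gT} | (<<[set x i | i : 'I_g]>>%g == [set: gT]) && [forall j, ((F j) (x, 1%g)).2 == 1%g]].

Lemma epis_eq (gT : finGroupType) g r n (P : presentation g r n) :
  epis gT P = epis' (piP gT P).
Proof.
apply/setP => x; rewrite /epis /epis' !inE; congr (_ && _).
by apply: eq_forallb => j; rewrite ffunE piw_act /= mul1g.
Qed.

Unset Implicit Arguments.

Theorem proposition3p2 (gT : finGroupType) (g r : nat) :
  (0 < g)%N -> (0 < r)%N ->
  (exists l : R, is_lim_seq (fun n : nat => p_epi gT g r n) l) /\
  (forall k : nat,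
     exists l : R, is_lim_seq (fun n : nat => p_epi_exactly gT g r k n) l).
Proof.
move=> _ _; split.
  have [l hl] := @prob_lim gT g r (fun F => epis' F != set0).
  exists l; apply: is_lim_seq_ext hl => n; rewrite /p_epi.
  by congr (Rdiv (INR _) _); apply: eq_card => P; rewrite !inE epis_eq.
move=> k.
have [l hl] := @prob_lim gT g r (fun F => #|[set aut_orbit x | x in epis' F]| == k).
exists l; apply: is_lim_seq_ext hl => n; rewrite /p_epi_exactly.
by congr (Rdiv (INR _) _); apply: eq_card => P; rewrite !inE /num_epi_mod_aut epis_eq.
Qed.
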